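(* Let $E$ be a finite set, $\mathcal{F}\subseteq 2^E$ a downward-closed family, $b_1,\dots,b_\ell\in\mathbb{R}_{\ge0}^{|E|}$, and $f(\boldsymbol{w})=\max_{S\in\mathcal{F}}\max_{i\in[\ell]}\langle b_i,\boldsymbol{w}_S\rangle$ for $\boldsymbol{w}\in\mathbb{R}_{\ge0}^{|E|}$. Let $L=\max_{S\in\mathcal{F},\,i\in[\ell],\,j\in E}a^S_{ij}$, where $a^S_{ij}=b_{ij}\cdot\mathbf{1}_{j\in S}$, and assume $L>0$. Then: (1) $f$ is $L$-Lipschitz: $|f(\boldsymbol{u})-f(\boldsymbol{v})|\le L\|\boldsymbol{u}-\boldsymbol{v}\|_1$; (2) $f$ is monotone: if $\boldsymbol{u}\ge\boldsymbol{v}$ coordinate-wise then $f(\boldsymbol{u})\ge f(\boldsymbol{v})$; (3) for every $\tau>0$, the function $f/(\tau L)$ restricted to the domain $[0,\tau]^{|E|}$ is self-bounding.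
   Context: For $S\subseteq E$ and $\boldsymbol{w}\in\mathbb{R}_{\ge0}^{|E|}$, $\boldsymbol{w}_S$ denotes the vector equal to $w_e$ on coordinates $e\in S$ and $0$ elsewhere; $b_{ij}$ is the $j$-th coordinate of $b_i$. A family $\mathcal{F}$ is downward-closed if $S\in\mathcal{F}$ and $T\subseteq S$ imply $T\in\mathcal{F}$. A function $g:\mathcal{X}\to\mathbb{R}$ on a product space $\mathcal{X}=\mathcal{X}_1\times\dots\times\mathcal{X}_n$ is self-bounding if there exist functions $g_i:\mathcal{X}^{(i)}\to\mathbb{R}$, $i\in[n]$, where $\mathcal{X}^{(i)}$ is the product of all factors except the $i$-th and $\boldsymbol{x}^{(i)}$ is $\boldsymbol{x}$ with the $i$-th coordinate removed, such that for all $\boldsymbol{x}$: $0\le g(\boldsymbol{x})-g_i(\boldsymbol{x}^{(i)})\le1$ for every $i$, and $\sum_{i}\big(g(\boldsymbol{x})-g_i(\boldsymbol{x}^{(i)})\big)\le g(\boldsymbol{x})$. *)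

(* Defs.v *)
From mathcomp Require Import all_boot all_order all_algebra.
Set Implicit Arguments. Unset Strict Implicit. Unset Printing Implicit Defensive.
Import Order.TTheory GRing.Theory Num.Theory.
Local Open Scope ring_scope.

Definition downward_closed (E : finType) (F : {set {set E}}) : Prop :=
  forall S T : {set E}, S \in F -> T \subset S -> T \in F.

Definition inner_restr (R : realFieldType) (E : finType)
  (bi : E -> R) (S : {set E}) (w : E -> R) : R :=
  \sum_(j in S) bi j * w j.

(* f(w) = max_{S in F} max_{i in [l]} <b_i, w_S>.
   All the maximised values are >= 0 for w >= 0 (b >= 0), so 0 is a harmless
   default for the iterated max (and F, 'I_l are nonempty when L > 0). *)
Definition fmax (R : realFieldType) (E : finType) (l : nat)
  (F : {set {set E}}) (b : 'I_l -> E -> R) (w : E -> R) : R :=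
  \big[Num.max/0]_(S in F) \big[Num.max/0]_(i < l) inner_restr (b i) S w.

Definition Lconst (R : realFieldType) (E : finType) (l : nat)
  (F : {set {set E}}) (b : 'I_l -> E -> R) : R :=
  \big[Num.max/0]_(S in F) \big[Num.max/0]_(i < l) \big[Num.max/0]_(j : E)
    (b i j * (j \in S)%:R).

(* Self-bounding function on the product space prod_{i in E} D i.
   A function g_i on X^(i) is represented as a function on E -> R which does
   not depend on coordinate i. *)
Definition self_bounding (R : realFieldType) (E : finType)
  (D : E -> R -> bool) (g : (E -> R) -> R) : Prop :=
  exists gi : E -> (E -> R) -> R,
    (forall i (x y : E -> R), (forall j, j != i -> x j = y j) -> gi i x = gi i y) /\
    (forall x : E -> R, (forall j, D j (x j)) ->
       (forall i, 0 <= g x - gi i x <= 1) /\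
       \sum_(i : E) (g x - gi i x) <= g x).

(* Main.v *)
Require Import Defs.
From mathcomp Require Import all_boot all_order all_algebra.
Import Order.TTheory GRing.Theory Num.Theory.
Local Open Scope ring_scope.

Section BM.
Variable R : realFieldType.
Variable I : finType.

Lemma bm_ge (P : pred I) (G : I -> R) i : P i ->
  G i <= \big[Num.max/0]_(k | P k) G k.
Proof. by move=> Pi; rewrite (bigD1 i) //= le_max lexx. Qed.

Lemma bm_le (P : pred I) (G : I -> R) c : 0 <= c ->
  (forall i, P i -> G i <= c) -> \big[Num.max/0]_(k | P k) G k <= c.
Proof.
move=> c0 H; apply: (big_ind (fun x => x <= c)) => // x y hx hy.
by rewrite ge_max hx hy.
Qed.

Lemma bm_ge0 (P : pred I) (G : I -> R) : 0 <= \big[Num.max/0]_(k | P k) G k.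
Proof.
apply: (big_rec (fun x => 0 <= x)) => // i x _ hx.
by rewrite le_max hx orbT.
Qed.

Lemma bm_ex (P : pred I) (G : I -> R) :
  \big[Num.max/0]_(k | P k) G k = 0 \/
  exists2 i, P i & \big[Num.max/0]_(k | P k) G k = G i.
Proof.
apply: (big_ind (fun x => x = 0 \/ exists2 i, P i & x = G i)); first by left.
  move=> x y hx hy; have [h|h] := leP x y.
    by [].
  by [].
by move=> i Pi; right; exists i.
Qed.
End BM.
Arguments bm_ge {R I P G} i.
Arguments bm_ex {R I}.

Lemma fmax_ext (R : realFieldType) (E : finType) (F : {set {set E}})
  (l : nat) (b : 'I_l -> E -> R) (w w' : E -> R) :
  (forall j, w j = w' j) -> fmax F b w = fmax F b w'.
Proof.
move=> h; rewrite /fmax; apply: eq_bigr => S _; apply: eq_bigr => i _.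
by rewrite /inner_restr; apply: eq_bigr => j _; rewrite h.
Qed.

Theorem proposition5 (R : realFieldType) (E : finType) (F : {set {set E}})
  (l : nat) (b : 'I_l -> E -> R) :
  downward_closed F ->
  (forall i j, 0 <= b i j) ->
  0 < Lconst F b ->
  [/\ (* (1) L-Lipschitz w.r.t. the l1 norm on R_{>=0}^E *)
      (forall u v : E -> R, (forall j, 0 <= u j) -> (forall j, 0 <= v j) ->
         `|fmax F b u - fmax F b v| <= Lconst F b * \sum_(j : E) `|u j - v j|),
      (* (2) monotone *)
      (forall u v : E -> R, (forall j, 0 <= v j) -> (forall j, v j <= u j) ->
         fmax F b v <= fmax F b u)
    & (* (3) f/(tau L) on [0,tau]^E is self-bounding *)
      (forall tau : R, 0 < tau ->
         self_bounding (fun (_ : E) (t : R) => (0 <= t) && (t <= tau))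
           (fun x => fmax F b x / (tau * Lconst F b)))].
Proof.
move=> _ b0 L0.
set L := Lconst F b.
have f0 : forall w, 0 <= fmax F b w by move=> w; apply: bm_ge0.
have a_le : forall w S i, S \in F -> inner_restr (b i) S w <= fmax F b w.
  move=> w S i SF; rewrite /fmax; apply: (le_trans _ (bm_ge S SF)).
  exact: (bm_ge (P := xpredT)).
have bL : forall S i j, S \in F -> j \in S -> b i j <= L.
  move=> S i j SF jS.
  rewrite /L /Lconst; apply: (le_trans _ (bm_ge S SF)).
  apply: (le_trans _ (bm_ge (P := xpredT) i isT)).
  apply: (le_trans _ (bm_ge (P := xpredT) j isT)) => /=.
  by rewrite jS mulr1.
have lip1 : forall u v, fmax F b u <= fmax F b v + L * \sum_j `|u j - v j|.
  move=> u v; apply: bm_le.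
    apply: addr_ge0 => //; apply: mulr_ge0; [exact: ltW | exact: sumr_ge0].
  move=> S SF; apply: bm_le.
    apply: addr_ge0 => //; apply: mulr_ge0; [exact: ltW | exact: sumr_ge0].
  move=> i _; apply: (@le_trans _ _ (inner_restr (b i) S v + L * \sum_j `|u j - v j|)); last first.
    by rewrite lerD2r a_le.
  rewrite -lerBlDl /inner_restr -sumrB.
  apply: (@le_trans _ _ (\sum_(j in S) L * `|u j - v j|)).
    apply: ler_sum => j jS; rewrite -mulrBr.
    apply: (le_trans _ (ler_wpM2r (normr_ge0 _) (bL _ i _ SF jS))).
    by rewrite mulrC -[X in _ <= X * _](ger0_norm (b0 i j)) -normrM mulrC ler_norm.
  rewrite -mulr_sumr ler_pM2l //.
  rewrite [X in _ <= X](bigID (fun j => j \in S)) /= lerDl.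
  by rewrite sumr_ge0.
have mono : forall u v : E -> R, (forall j, 0 <= v j) -> (forall j, v j <= u j) ->
         fmax F b v <= fmax F b u.
  move=> u v v0 vu; apply: bm_le => // S SF; apply: bm_le => // i _.
  apply: (le_trans _ (a_le u S i SF)).
  by apply: ler_sum => j _; rewrite ler_wpM2l.
split => //.
  move=> u v _ _; rewrite ler_norml; apply/andP; split.
    rewrite lerNl opprB lerBlDr addrC.
    rewrite (eq_bigr (fun j => `|v j - u j|)) ?lip1 // => j _.
    by rewrite distrC.
  by rewrite lerBlDr addrC lip1.
move=> tau tau0.
have tL : 0 < tau * L by rewrite mulr_gt0.
pose xi (i : E) (x : E -> R) := fun j => if j == i then 0 else x j.
exists (fun i x => fmax F b (xi i x) / (tau * L)); split.
  move=> i x y h; congr (_ / _); apply: fmax_ext => j.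
  by rewrite /xi; case: eqP => // /eqP; apply: h.
move=> x hx.
have x0 : forall j, 0 <= x j by move=> j; case/andP: (hx j).
have xi0 : forall i j, 0 <= xi i x j by move=> i j; rewrite /xi; case: eqP.
have xile : forall i j, xi i x j <= x j by move=> i j; rewrite /xi; case: eqP.
split.
  move=> i; rewrite -mulrBl; apply/andP; split.
    by apply: divr_ge0; [rewrite subr_ge0; apply: mono | apply: ltW].
  rewrite ler_pdivrMr // mul1r lerBlDr addrC.
  apply: (le_trans (lip1 _ (xi i x))); rewrite lerD2l mulrC ler_pM2r //.
  rewrite (bigD1 i) //= big1; last first.
    by move=> j /negbTE ji; rewrite /xi ji subrr normr0.
  rewrite addr0 /xi eqxx subr0 ger0_norm //.
  by case/andP: (hx i).
under eq_bigr => i _ do rewrite -mulrBl.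
rewrite -mulr_suml ler_pM2r ?invr_gt0 //.
have triv : fmax F b x = 0 -> \sum_i (fmax F b x - fmax F b (xi i x)) <= fmax F b x.
  move=> ->; apply: sumr_le0 => i _; by rewrite sub0r oppr_le0.
case: (bm_ex (fun S => S \in F) (fun S => \big[Num.max/0]_(i < l) inner_restr (b i) S x)).
  by move=> h; apply: triv; exact: h.
move=> [S SF hS].
case: (bm_ex xpredT (fun i => inner_restr (b i) S x)).
  by move=> h; apply: triv; rewrite /fmax hS h.
move=> [i _ hi].
have fx : fmax F b x = inner_restr (b i) S x by rewrite /fmax hS hi.
apply: (@le_trans _ _ (\sum_j (inner_restr (b i) S x - inner_restr (b i) S (xi j x)))).
  by apply: ler_sum => j _; rewrite fx lerB // a_le.
rewrite fx /inner_restr.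
rewrite (eq_bigr (fun j => \sum_(k in S) b i k * (x k - xi j x k))); last first.
  by move=> j _; rewrite -sumrB; apply: eq_bigr => k _; rewrite mulrBr.
rewrite exchange_big /=; apply: ler_sum => k _.
rewrite -mulr_sumr ler_wpM2l // (bigD1 k) //= big1; last first.
  by move=> j /negbTE jk; rewrite /xi eq_sym jk subrr.
by rewrite addr0 /xi eqxx subr0.
Qed.
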